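(* (1) If $(\alpha^*,u_1^* )$ is an inverse Stackelberg solution, then the pair $(u_0^*,u_1^* )$ with $u_0^*=\alpha^*[u_1^*]$ belongs to $\mathcal{A}$ and $(u_0^*,u_1^* )\in\operatorname{Argmax}\{J_0(u_0,u_1):(u_0,u_1)\in\mathcal{A}\}$. (2) If $(u_0^*,u_1^* )\in\mathcal{A}$ satisfies $(u_0^*,u_1^* )\in\operatorname{Argmax}\{J_0(u_0,u_1):(u_0,u_1)\in\mathcal{A}\}$, then there exists an incentive strategy $\alpha^*$ of the leader such that $\alpha^*[u_1^*]=u_0^*$ and $(\alpha^*,u_1^* )$ is an inverse Stackelberg solution. (3) There exists at least one inverse Stackelberg solution.
   Context: Two-player static game: player $0$ is the leader, player $1$ the follower. $P_0,P_1$ are nonempty compact metric spaces (strategy sets) and $J_0,J_1:P_0\times P_1\to\mathbb{R}$ are continuous payoff functions; each player maximizes his payoff. An incentive strategy of the leader is an arbitrary map $\alpha:P_1\to P_0$, written $u_1\mapsto\alpha[u_1]$. The set of optimal strategies of the follower against $\alpha$ is $\mathcal{F}(\alpha)=\{u_1^*\in P_1: J_1(\alpha[u_1],u_1)\le J_1(\alpha[u_1^*],u_1^* )\ \text{for all } u_1\in P_1\}$. A pair $(\alpha^*,u_1^* )$ (incentive strategy, follower strategy) is an inverse Stackelberg solution if $u_1^*\in\mathcal{F}(\alpha^* )$ and for every incentive strategy $\alpha$, $J_0(\alpha^*[u_1^*],u_1^* )\ge\sup\{J_0(\alpha[u_1],u_1):u_1\in\mathcal{F}(\alpha)\}$ (with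 $\sup\emptyset=-\infty$). Let $V^-=\max_{u_1\in P_1}\min_{u_0\in P_0}J_1(u_0,u_1)$ and $\mathcal{A}=\{(u_0,u_1)\in P_0\times P_1: J_1(u_0,u_1)\ge V^-\}$. *)

(* Defs.v *)
From Stdlib Require Import Reals List.
Open Scope R_scope.

Definition open_in (X : Metric_Space) (U : Base X -> Prop) : Prop :=
  forall x, U x -> exists e, e > 0 /\ forall y, dist X x y < e -> U y.

Definition compact_space (X : Metric_Space) : Prop :=
  forall (I : Type) (U : I -> Base X -> Prop),
    (forall i, open_in X (U i)) ->
    (forall x, exists i, U i x) ->
    exists l : list I, forall x, exists i, In i l /\ U i x.

Definition nonempty_space (X : Metric_Space) : Prop := inhabited (Base X).

Definition continuous2 (X0 X1 : Metric_Space) (J : Base X0 -> Base X1 -> R) : Prop :=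
  forall x0 x1 eps, eps > 0 -> exists delta, delta > 0 /\
    forall y0 y1, dist X0 x0 y0 < delta -> dist X1 x1 y1 < delta ->
      Rabs (J y0 y1 - J x0 x1) < eps.

Definition is_min_value {A : Type} (f : A -> R) (m : R) : Prop :=
  (exists a, f a = m) /\ forall a, m <= f a.
Definition is_max_value {A : Type} (f : A -> R) (m : R) : Prop :=
  (exists a, f a = m) /\ forall a, f a <= m.

Definition is_lower_value {P0 P1 : Type} (J1 : P0 -> P1 -> R) (V : R) : Prop :=
  exists g : P1 -> R,
    (forall u1, is_min_value (fun u0 => J1 u0 u1) (g u1)) /\ is_max_value g V.

Definition in_A {P0 P1 : Type} (J1 : P0 -> P1 -> R) (V : R) (u0 : P0) (u1 : P1) : Prop :=
  J1 u0 u1 >= V.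

Definition follower_opt {P0 P1 : Type} (J1 : P0 -> P1 -> R) (alpha : P1 -> P0) (u1s : P1) : Prop :=
  forall u1, J1 (alpha u1) u1 <= J1 (alpha u1s) u1s.

(* Inverse Stackelberg solution. The condition
   J0(alphas[u1s],u1s) >= sup {J0(alpha[u1],u1) : u1 in F(alpha)}  (sup of empty = -oo)
   is written out as: it bounds every element of that set. *)
Definition inverse_stackelberg {P0 P1 : Type} (J0 J1 : P0 -> P1 -> R)
    (alphas : P1 -> P0) (u1s : P1) : Prop :=
  follower_opt J1 alphas u1s /\
  forall (alpha : P1 -> P0) (u1 : P1), follower_opt J1 alpha u1 ->
    J0 (alpha u1) u1 <= J0 (alphas u1s) u1s.

Definition argmax_A {P0 P1 : Type} (J0 J1 : P0 -> P1 -> R) (V : R) (u0 : P0) (u1 : P1) : Prop :=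
  in_A J1 V u0 u1 /\ forall v0 v1, in_A J1 V v0 v1 -> J0 v0 v1 <= J0 u0 u1.

(* Main.v *)
Require Import Defs.
From Stdlib Require Import Reals List Lra Classical ClassicalEpsilon.
Open Scope R_scope.

Lemma list_max {T} (f : T -> R) (l : list T) (a : T) :
  In a l -> exists m, In m l /\ forall x, In x l -> f x <= f m.
Proof.
  revert a; induction l as [|b l IH]; simpl; [tauto|].
  intros a _. destruct l as [|c l'].
  - exists b. split; [auto|]. intros x [->|[]]. lra.
  - destruct (IH c (or_introl eq_refl)) as [m [Hm Hmax]].
    destruct (Rle_dec (f b) (f m)).
    + exists m. split; [right; exact Hm|]. intros x [->|Hx]; [lra|auto].
    + exists b. split; [left; auto|]. intros x [->|Hx]; [lra|].
      specialize (Hmax x Hx). lra.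
Qed.

Lemma max_gen {T : Type} (Op : (T -> Prop) -> Prop)
  (Comp : forall (I : Type) (U : I -> T -> Prop), (forall i, Op (U i)) ->
     (forall x, exists i, U i x) -> exists l : list I, forall x, exists i, In i l /\ U i x)
  (A : T -> Prop) (f : T -> R) (a : T) (Ha : A a)
  (Hopen : forall q, Op (fun p => f p < f q \/ ~ A p)) :
  exists m, A m /\ forall p, A p -> f p <= f m.
Proof.
  apply NNPP; intro Hno.
  assert (H : forall m, A m -> exists p, A p /\ f m < f p).
  { intros m Am. apply NNPP; intro Hn. apply Hno. exists m. split; auto.
    intros p Ap. apply Rnot_lt_le. intro Hlt. apply Hn. eauto. }
  set (I := {q : T | A q}).
  destruct (Comp I (fun q p => f p < f (proj1_sig q) \/ ~ A p)) as [l Hl].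
  - intros [q Hq]. apply Hopen.
  - intros x. destruct (classic (A x)) as [Ax|nAx].
    + destruct (H x Ax) as [p [Ap Hp]]. exists (exist _ p Ap). simpl. auto.
    + exists (exist _ a Ha). auto.
  - destruct (Hl a) as [i0 [Hi0 _]].
    destruct (list_max (fun q : I => f (proj1_sig q)) l i0 Hi0) as [[m Am] [Hm Hmax]].
    destruct (Hl m) as [[q' Aq'] [Hq' Hc]]. simpl in Hc.
    specialize (Hmax _ Hq'). simpl in Hmax. destruct Hc as [Hc|Hc]; [lra|tauto].
Qed.
Definition box_open (X0 X1 : Metric_Space) (W : Base X0 * Base X1 -> Prop) : Prop :=
  forall p, W p -> exists e, e > 0 /\ forall y0 y1,
    dist X0 (fst p) y0 < e -> dist X1 (snd p) y1 < e -> W (y0, y1).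

Lemma fold_min_pos (l : list R) : (forall x, In x l -> x > 0) -> fold_right Rmin 1 l > 0.
Proof.
  induction l as [|a l IH]; simpl; intros H; [lra|].
  apply Rmin_glb_lt; [apply H; auto| apply IH; auto].
Qed.

Lemma fold_min_le (l : list R) x : In x l -> fold_right Rmin 1 l <= x.
Proof.
  induction l as [|a l IH]; simpl; [tauto|].
  intros [->|Hx]; [apply Rmin_l|]. eapply Rle_trans; [apply Rmin_r| auto].
Qed.

Lemma ball_open (X : Metric_Space) x e : open_in X (fun y => dist X x y < e).
Proof.
  intros y Hy. exists (e - dist X x y). split; [lra|].
  intros z Hz. pose proof (dist_tri X x z y). lra.
Qed.

Lemma prod_compact (X0 X1 : Metric_Space) :
  compact_space X0 -> compact_space X1 ->
  forall (I : Type) (W : I -> Base X0 * Base X1 -> Prop),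
    (forall i, box_open X0 X1 (W i)) -> (forall x, exists i, W i x) ->
    exists l : list I, forall x, exists i, In i l /\ W i x.
Proof.
  intros C0 C1 I W HW Hcov.
  assert (A : forall x1, exists d, d > 0 /\ exists li : list I, forall y0 y1,
     dist X1 x1 y1 < d -> exists i, In i li /\ W i (y0, y1)).
  { intros x1.
    assert (S : forall x0, {pr : I * R | snd pr > 0 /\ forall y0 y1,
       dist X0 x0 y0 < snd pr -> dist X1 x1 y1 < snd pr -> W (fst pr) (y0, y1)}).
    { intros x0. apply constructive_indefinite_description.
      destruct (Hcov (x0, x1)) as [i Hi]. destruct (HW i _ Hi) as [e [He Hb]].
      exists (i, e). simpl. auto. }
    set (ii := fun x0 => fst (proj1_sig (S x0))).
    set (ee := fun x0 => snd (proj1_sig (S x0))).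
    assert (Hee : forall x0, ee x0 > 0 /\ forall y0 y1,
       dist X0 x0 y0 < ee x0 -> dist X1 x1 y1 < ee x0 -> W (ii x0) (y0, y1)).
    { intros x0. unfold ee, ii. destruct (S x0) as [pr Hpr]. exact Hpr. }
    destruct (C0 (Base X0) (fun x0 y0 => dist X0 x0 y0 < ee x0)) as [l0 Hl0].
    - intros x0. apply ball_open.
    - intros x. exists x. rewrite (proj2 (dist_refl X0 x x) eq_refl).
      apply (proj1 (Hee x)).
    - exists (fold_right Rmin 1 (map ee l0)). split.
      + apply fold_min_pos. intros x Hx. apply in_map_iff in Hx.
        destruct Hx as [x0 [<- _]]. apply (proj1 (Hee x0)).
      + exists (map ii l0). intros y0 y1 Hy1.
        destruct (Hl0 y0) as [x0 [Hx0 Hd]]. exists (ii x0). split.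
        * apply in_map; auto.
        * apply (proj2 (Hee x0)); auto.
          eapply Rlt_le_trans; [exact Hy1|]. apply fold_min_le. apply in_map; auto. }
  assert (S : forall x1, {pr : R * list I | snd (pr) = snd pr /\ fst pr > 0 /\ forall y0 y1,
     dist X1 x1 y1 < fst pr -> exists i, In i (snd pr) /\ W i (y0, y1)}).
  { intros x1. apply constructive_indefinite_description.
    destruct (A x1) as [d [Hd [li Hli]]]. exists (d, li). simpl. auto. }
  set (dd := fun x1 => fst (proj1_sig (S x1))).
  set (LL := fun x1 => snd (proj1_sig (S x1))).
  assert (Hdd : forall x1, dd x1 > 0 /\ forall y0 y1,
     dist X1 x1 y1 < dd x1 -> exists i, In i (LL x1) /\ W i (y0, y1)).
  { intros x1. unfold dd, LL. destruct (S x1) as [pr Hpr]. exact (proj2 Hpr). }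
  destruct (C1 (Base X1) (fun x1 y1 => dist X1 x1 y1 < dd x1)) as [l1 Hl1].
  - intros x1. apply ball_open.
  - intros x. exists x. rewrite (proj2 (dist_refl X1 x x) eq_refl).
    apply (proj1 (Hdd x)).
  - exists (flat_map LL l1). intros [y0 y1].
    destruct (Hl1 y1) as [x1 [Hx1 Hd]].
    destruct (proj2 (Hdd x1) y0 y1 Hd) as [i [Hi Hw]].
    exists i. split; auto. apply in_flat_map. eauto.
Qed.

Lemma dist0 (X : Metric_Space) (x : Base X) : dist X x x = 0.
Proof. apply (proj2 (dist_refl X x x) eq_refl). Qed.

Lemma lower_value_exists (P0 P1 : Metric_Space) (J1 : Base P0 -> Base P1 -> R)
  (hP0c : compact_space P0) (hP1c : compact_space P1)
  (hP0n : nonempty_space P0) (hP1n : nonempty_space P1)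
  (hJ1 : continuous2 P0 P1 J1) : exists V, is_lower_value J1 V.
Proof.
  destruct hP0n as [a0]. destruct hP1n as [a1].
  assert (Hm : forall u1, {u0 | forall v0, J1 u0 u1 <= J1 v0 u1}).
  { intros u1. apply constructive_indefinite_description.
    destruct (max_gen (open_in P0) (hP0c) (fun _ => True) (fun u0 => - J1 u0 u1) a0 I)
      as [m [_ Hm]].
    - intros q p [Hp|Hp]; [|tauto].
      destruct (hJ1 p u1 (J1 p u1 - J1 q u1)) as [d [Hd Hb]]; [lra|].
      exists d. split; auto. intros y Hy. left.
      specialize (Hb y u1 Hy). rewrite dist0 in Hb. specialize (Hb Hd).
      apply Rabs_def2 in Hb. lra.
    - exists m. intros v0. specialize (Hm v0 I). lra. }
  set (m := fun u1 => proj1_sig (Hm u1)).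
  assert (Hmm : forall u1 v0, J1 (m u1) u1 <= J1 v0 u1).
  { intros u1. unfold m. destruct (Hm u1) as [x Hx]. exact Hx. }
  set (g := fun u1 => J1 (m u1) u1).
  destruct (max_gen (open_in P1) hP1c (fun _ => True) g a1 I) as [v [_ Hv]].
  - intros q p [Hp|Hp]; [|tauto].
    destruct (hJ1 (m p) p (g q - g p)) as [d [Hd Hb]]; [lra|].
    exists d. split; auto. intros y Hy. left.
    specialize (Hb (m p) y). rewrite dist0 in Hb. specialize (Hb Hd Hy).
    apply Rabs_def2 in Hb. unfold g in *. specialize (Hmm y (m p)). lra.
  - exists (g v). exists g. split.
    + intros u1. split; [exists (m u1); reflexivity|]. intros a. apply Hmm.
    + split; [exists v; reflexivity|]. intros a. apply (Hv a I).
Qed.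

Lemma lv_facts {P0 P1 : Type} (J1 : P0 -> P1 -> R) V : is_lower_value J1 V ->
  exists m : P1 -> P0, (forall u1, J1 (m u1) u1 <= V) /\
    exists u1v, forall u0, V <= J1 u0 u1v.
Proof.
  intros [g [Hmin [[v Hv] Hmax]]].
  assert (Hm : forall u1, {u0 | J1 u0 u1 = g u1}).
  { intros u1. apply constructive_indefinite_description. apply (proj1 (Hmin u1)). }
  exists (fun u1 => proj1_sig (Hm u1)). split.
  - intros u1. destruct (Hm u1) as [x Hx]. simpl. rewrite Hx. apply Hmax.
  - exists v. intros u0. rewrite <- Hv. apply (proj2 (Hmin v)).
Qed.

Lemma part2 {P0 P1 : Type} (J0 J1 : P0 -> P1 -> R) V : is_lower_value J1 V ->
  forall (u0s : P0) (u1s : P1),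
        in_A J1 V u0s u1s -> argmax_A J0 J1 V u0s u1s ->
        exists alphas : P1 -> P0,
          alphas u1s = u0s /\ inverse_stackelberg J0 J1 alphas u1s.
Proof.
  intros HV u0s u1s HA [_ Hmax].
  destruct (lv_facts J1 V HV) as [m [Hm [u1v Hu1v]]].
  exists (fun u1 => if excluded_middle_informative (u1 = u1s) then u0s else m u1).
  split.
  - destruct (excluded_middle_informative (u1s = u1s)); tauto.
  - split.
    + intros u1. destruct (excluded_middle_informative (u1s = u1s)); [|tauto].
      destruct (excluded_middle_informative (u1 = u1s)) as [->|]; [lra|].
      specialize (Hm u1). unfold in_A in HA. lra.
    + intros alpha u1 Hf.
      destruct (excluded_middle_informative (u1s = u1s)); [|tauto].
      apply Hmax. unfold in_A. specialize (Hf u1v). specialize (Hu1v (alpha u1v)). lra.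
Qed.

Lemma part1 {P0 P1 : Type} (J0 J1 : P0 -> P1 -> R) V : is_lower_value J1 V ->
  forall (alphas : P1 -> P0) (u1s : P1),
        inverse_stackelberg J0 J1 alphas u1s ->
        in_A J1 V (alphas u1s) u1s /\ argmax_A J0 J1 V (alphas u1s) u1s.
Proof.
  intros HV alphas u1s [Hf Hs].
  destruct (lv_facts J1 V HV) as [m [Hm [u1v Hu1v]]].
  assert (HA : in_A J1 V (alphas u1s) u1s).
  { unfold in_A. specialize (Hf u1v). specialize (Hu1v (alphas u1v)). lra. }
  split; [exact HA|]. split; [exact HA|].
  intros v0 v1 Hv.
  set (al := fun u1 => if excluded_middle_informative (u1 = v1) then v0 else m u1).
  assert (Hfo : follower_opt J1 al v1).
  { intros u1. unfold al. destruct (excluded_middle_informative (v1 = v1)); [|tauto].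
    destruct (excluded_middle_informative (u1 = v1)) as [->|]; [lra|].
    specialize (Hm u1). unfold in_A in Hv. lra. }
  pose proof (Hs al v1 Hfo) as H. unfold al in H.
  destruct (excluded_middle_informative (v1 = v1)); [exact H|tauto].
Qed.

Theorem theorem1 (P0 P1 : Metric_Space)
  (J0 J1 : Base P0 -> Base P1 -> R)
  (hP0c : compact_space P0) (hP1c : compact_space P1)
  (hP0n : nonempty_space P0) (hP1n : nonempty_space P1)
  (hJ0 : continuous2 P0 P1 J0) (hJ1 : continuous2 P0 P1 J1) :
  (forall V : R, is_lower_value J1 V ->
     (forall (alphas : Base P1 -> Base P0) (u1s : Base P1),
        inverse_stackelberg J0 J1 alphas u1s ->
        in_A J1 V (alphas u1s) u1s /\ argmax_A J0 J1 V (alphas u1s) u1s) /\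
     (forall (u0s : Base P0) (u1s : Base P1),
        in_A J1 V u0s u1s -> argmax_A J0 J1 V u0s u1s ->
        exists alphas : Base P1 -> Base P0,
          alphas u1s = u0s /\ inverse_stackelberg J0 J1 alphas u1s)) /\
  (exists (alphas : Base P1 -> Base P0) (u1s : Base P1),
     inverse_stackelberg J0 J1 alphas u1s).
Proof.
  split.
  - intros V HV. split; [apply part1; auto| apply part2; auto].
  - destruct (lower_value_exists P0 P1 J1 hP0c hP1c hP0n hP1n hJ1) as [V HV].
    pose proof HV as HV'.
    destruct (lv_facts J1 V HV') as [m [Hm [u1v Hu1v]]].
    destruct hP0n as [a0].
    destruct (max_gen (box_open P0 P1) (prod_compact P0 P1 hP0c hP1c)
      (fun p => J1 (fst p) (snd p) >= V) (fun p => J0 (fst p) (snd p)) (a0, u1v))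
      as [[u0s u1s] [HA Hmax]].
    + simpl. apply Rle_ge, Hu1v.
    + intros q [p0 p1] [Hp|Hp]; simpl in Hp.
      * destruct (hJ0 p0 p1 (J0 (fst q) (snd q) - J0 p0 p1)) as [d [Hd Hb]]; [lra|].
        exists d. split; auto. intros y0 y1 H0 H1. left. simpl.
        specialize (Hb y0 y1 H0 H1). apply Rabs_def2 in Hb. lra.
      * destruct (hJ1 p0 p1 (V - J1 p0 p1)) as [d [Hd Hb]]; [lra|].
        exists d. split; auto. intros y0 y1 H0 H1. right. simpl.
        specialize (Hb y0 y1 H0 H1). apply Rabs_def2 in Hb. lra.
    + destruct (part2 J0 J1 V HV u0s u1s HA) as [alphas [_ Has]].
      * split; [exact HA|]. intros v0 v1 Hv. apply (Hmax (v0, v1) Hv).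
      * exists alphas, u1s. exact Has.
Qed.
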